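(* In the algebra $\mathcal Y_d$ the following hold for all $r,s\ge0$: $[a_r,a_s]=0$; $[a_1,b_s]=b_s$; $[a_{r+1},b_s]-[a_r,b_{s+1}]=b_{r+s}-\sum_{t=0}^{r-1}b_{r+s-t-1}a_t$; $[b_{r+1},b_s]-[b_r,b_{s+1}]=b_rb_s+b_sb_r$.
   Context: Let $V=\mathbb C^d$ and $\mathfrak a=(\mathfrak{gl}(V)\ltimes V)\oplus(\mathfrak{gl}(V)\ltimes V^* )$ with basis $e_{ij}$, $e'_{ij}$ (standard matrix units of the two copies of $\mathfrak{gl}(V)$), $q_i$ (basis of $V$), $p_i$ (basis of $V^*$), brackets: standard $\mathfrak{gl}$ brackets among the $e$'s and among the $e'$'s, $[e_{ij},q_k]=\delta_{jk}q_i$, $[e'_{ij},p_k]=-\delta_{ki}p_j$, all other brackets of basis elements zero. Let $\mathfrak{gl}(V)_{\rm diag}$ be spanned by $e_{ij}+e'_{ij}$ and $\mathcal Y_d:=\big(U(\mathfrak a)/U(\mathfrak a)\mathfrak{gl}(V)_{\rm diag}\big)^{\mathfrak{gl}(V)_{\rm diag}}$ (an algebra, the quantum Hamiltonian reduction). Define in $\mathcal Y_d$ the images of $a_r=\sum_{i_1,\dots,i_r}e_{i_1i_2}e_{i_2i_3}\cdots e_{i_ri_1}$ ($r\ge1$), $a_0=d$, and $b_s=\sum_{i_1,\dots,i_{s+1}}p_{i_1}e_{i_1i_2}\cdots e_{i_si_{s+1}}q_{i_{s+1}}$ ($s\ge0$). *)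

(* Defs.v *)
From HB Require Import structures.
From mathcomp Require Import all_boot all_algebra.
From mathcomp Require Import complex reals Rstruct.
Set Implicit Arguments. Unset Strict Implicit. Unset Printing Implicit Defensive.
Import GRing.Theory.
Local Open Scope ring_scope.

Definition CC : fieldType := Rdefinitions.R[i].

Definition lcomm (A : pzRingType) (x y : A) : A := x * y - y * x.

(* [A], [e], [e'], [q], [p] is a representation of the Lie algebra
   a = (gl(V) |x V) (+) (gl(V) |x V^dual), V = C^d, in the associative C-algebra A:
   the images satisfy  x y - y x = [x, y]  for all basis elements x, y of a.
   U(a) is the initial such algebra (universal property). *)
Definition a_rep (d : nat) (A : algType CC)
    (e e' : 'I_d -> 'I_d -> A) (q p : 'I_d -> A) : Prop :=
  [/\ [/\ (forall i j k l, lcomm (e i j) (e k l)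
                       = (j == k)%:R * e i l - (l == i)%:R * e k j),
      (forall i j k l, lcomm (e' i j) (e' k l)
                       = (j == k)%:R * e' i l - (l == i)%:R * e' k j),
      (forall i j k, lcomm (e i j) (q k) = (j == k)%:R * q i) &
      (forall i j k, lcomm (e' i j) (p k) = - ((k == i)%:R * p j))],
      (forall i j k l, lcomm (e i j) (e' k l) = 0),
      (forall i j k, lcomm (e i j) (p k) = 0),
      (forall i j k, lcomm (e' i j) (q k) = 0) &
      [/\ (forall i j, lcomm (q i) (q j) = 0),
          (forall i j, lcomm (p i) (p j) = 0) &
          (forall i j, lcomm (q i) (p j) = 0)]].

Definition in_diag_left_ideal (d : nat) (A : algType CC)
    (e e' : 'I_d -> 'I_d -> A) (x : A) : Prop :=
  exists c : 'I_d -> 'I_d -> A,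
    x = \sum_(i < d) \sum_(j < d) c i j * (e i j + e' i j).

Definition a_el (d : nat) (A : algType CC) (e : 'I_d -> 'I_d -> A) (r : nat) : A :=
  if r is 0 then d%:R
  else \sum_(f : {ffun 'I_r -> 'I_d}) \prod_(k < r) e (f k) (f (ordS k)).

Definition b_el (d : nat) (A : algType CC) (e : 'I_d -> 'I_d -> A)
    (q p : 'I_d -> A) (s : nat) : A :=
  \sum_(f : {ffun 'I_s.+1 -> 'I_d})
     (p (f ord0) * (\prod_(k < s) e (f (inord k)) (f (inord k.+1))) * q (f ord_max)).

(* Main.v *)
Require Import Defs.
From HB Require Import structures.
From mathcomp Require Import all_boot all_algebra.
From mathcomp Require Import complex reals Rstruct.
From Stdlib Require Import Lia.
From mathcomp Require Import zify.
Set Implicit Arguments. Unset Strict Implicit. Unset Printing Implicit Defensive.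
Import GRing.Theory.
Local Open Scope ring_scope.

Section Comm.
Variable R : pzRingType.
Implicit Types x y z : R.

Lemma lcommMl x y z : lcomm (x * y) z = x * lcomm y z + lcomm x z * y.
Proof. by rewrite /lcomm mulrBr mulrBl !mulrA addrA subrK. Qed.

Lemma lcommMr x y z : lcomm x (y * z) = lcomm x y * z + y * lcomm x z.
Proof. by rewrite /lcomm mulrBr mulrBl !mulrA addrA subrK. Qed.

Lemma lcomm_suml I (r : seq I) (P : pred I) (F : I -> R) y :
  lcomm (\sum_(i <- r | P i) F i) y = \sum_(i <- r | P i) lcomm (F i) y.
Proof. by rewrite /lcomm mulr_suml mulr_sumr -sumrB. Qed.

Lemma lcomm_sumr I (r : seq I) (P : pred I) (F : I -> R) y :
  lcomm y (\sum_(i <- r | P i) F i) = \sum_(i <- r | P i) lcomm y (F i).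
Proof. by rewrite /lcomm mulr_suml mulr_sumr -sumrB. Qed.

Lemma lcommDl x y z : lcomm (x + y) z = lcomm x z + lcomm y z.
Proof. by rewrite /lcomm mulrDl mulrDr opprD addrACA. Qed.
Lemma lcommDr x y z : lcomm z (x + y) = lcomm z x + lcomm z y.
Proof. by rewrite /lcomm mulrDl mulrDr opprD addrACA. Qed.
Lemma lcommNl x y : lcomm (- x) y = - lcomm x y.
Proof. by rewrite /lcomm mulNr mulrN opprB opprK addrC. Qed.
Lemma lcommNr x y : lcomm y (- x) = - lcomm y x.
Proof. by rewrite /lcomm mulNr mulrN opprB opprK addrC. Qed.
Lemma lcommBl x y z : lcomm (x - y) z = lcomm x z - lcomm y z.
Proof. by rewrite lcommDl lcommNl. Qed.
Lemma lcommBr x y z : lcomm z (x - y) = lcomm z x - lcomm z y.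
Proof. by rewrite lcommDr lcommNr. Qed.
Lemma lcommMnl x y n : lcomm (x *+ n) y = lcomm x y *+ n.
Proof. by rewrite /lcomm mulrnAl mulrnAr mulrnBl. Qed.
Lemma lcommMnr x y n : lcomm y (x *+ n) = lcomm y x *+ n.
Proof. by rewrite /lcomm mulrnAl mulrnAr mulrnBl. Qed.
Lemma lcommC x y : lcomm x y = - lcomm y x.
Proof. by rewrite /lcomm opprB. Qed.
Lemma lcomm_natl n y : lcomm n%:R y = 0.
Proof. by rewrite /lcomm (commr_nat y n) subrr. Qed.
Lemma lcomm_natr n y : lcomm y n%:R = 0.
Proof. by rewrite lcommC lcomm_natl oppr0. Qed.
Lemma lcomm_mulnatr n x y : lcomm x (y * n%:R) = lcomm x y * n%:R.
Proof. by rewrite lcommMr lcomm_natr mulr0 addr0. Qed.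
Lemma lcommE x y : x * y = y * x + lcomm x y.
Proof. by rewrite /lcomm addrC subrK. Qed.
Lemma lcomm_jacobi x y z :
  lcomm x (lcomm y z) = lcomm (lcomm x y) z + lcomm y (lcomm x z).
Proof.
rewrite lcommBr !lcommMr.
set a := lcomm x y * z; set b := y * lcomm x z; set c := lcomm x z * y.
set f := z * lcomm x y.
rewrite [X in _ = X + _]/lcomm [X in _ = _ + X]/lcomm -/a -/b -/c -/f.
by rewrite opprD (addrC (-c)) addrACA.
Qed.
End Comm.

Lemma zid (V : zmodType) (a b Z G : V) : a + b - (Z + G) - (b - G) = a - Z.
Proof. by rewrite opprD opprB -!addrA; congr (_ + _); rewrite addKr addrC -addrA addNr addr0. Qed.

Lemma two_neq0 : (2%:R : CC) != 0.
Proof. by rewrite (Num.Theory.pnatr_eq0 (Rdefinitions.R[i]) 2). Qed.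
Lemma half (B : algType CC) (x : B) : x *+ 2 = 0 -> x = 0.
Proof.
move=> h; rewrite -[x]scale1r -(mulVf two_neq0) -scalerA scaler_nat h.
by rewrite scaler0.
Qed.
Lemma lcomm_mulnatl (R : pzRingType) n (x y : R) : lcomm (x * n%:R) y = lcomm x y * n%:R.
Proof. by rewrite lcommMl lcomm_natl mulr0 add0r. Qed.

Section Main.
Variables (d : nat) (A : algType CC) (e : 'I_d -> 'I_d -> A) (q p : 'I_d -> A).
Hypothesis hee : forall i j k l, lcomm (e i j) (e k l) = e i l *+ (j == k) - e k j *+ (l == i).
Hypothesis heq : forall i j k, lcomm (e i j) (q k) = q i *+ (j == k).
Hypothesis hep : forall i j k, lcomm (e i j) (p k) = 0.
Hypothesis hqp : forall i j, lcomm (q i) (p j) = 0.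
Hypothesis hpp : forall i j, lcomm (p i) (p j) = 0.
Hypothesis hqq : forall i j, lcomm (q i) (q j) = 0.

Definition M : 'M[A]_d := \matrix_(i, j) e i j.
Definition X n i j := (M ^+ n) i j.
Definition Qc : 'cV[A]_d := \col_i q i.
Definition w n i := (M ^+ n *m Qc) i ord0.
Definition av m := \sum_i X m i i.
Definition bv s := \sum_k p k * w s k.

Lemma XSr n i j : X n.+1 i j = \sum_c X n i c * e c j.
Proof. by rewrite /X exprSr -mulmxE mxE; apply: eq_bigr => c _; rewrite mxE. Qed.
Lemma wS n i : w n.+1 i = \sum_c e i c * w n c.
Proof. by rewrite /w exprS -mulmxE -mulmxA mxE; apply: eq_bigr => c _; rewrite mxE. Qed.
Lemma X0 i j : X 0 i j = (i == j)%:R.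
Proof. by rewrite /X expr0 mxE. Qed.
Lemma w0 i : w 0 i = q i.
Proof. by rewrite /w expr0 mul1mx mxE. Qed.
Lemma Xw l n i : \sum_c X l i c * w n c = w (l + n) i.
Proof. by rewrite /w exprD -mulmxE -mulmxA mxE. Qed.
Lemma av0 : av 0 = d%:R.
Proof.
rewrite /av (eq_bigr (fun _ => 1)) => [|i _]; last by rewrite X0 eqxx.
by rewrite sumr_const card_ord.
Qed.

Definition consf (T : finType) n (x : T) (g : {ffun 'I_n -> T}) : {ffun 'I_n.+1 -> T} :=
  [ffun i => if unlift ord0 i is Some j then g j else x].
Lemma sum_ffunS (T : finType) (V : nmodType) n (F : {ffun 'I_n.+1 -> T} -> V) :
  \sum_f F f = \sum_(x : T) \sum_(g : {ffun 'I_n -> T}) F (consf x g).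
Proof.
rewrite pair_big /=.
rewrite (reindex (fun u : T * {ffun 'I_n -> T} => consf u.1 u.2)) //=.
exists (fun f : {ffun 'I_n.+1 -> T} => (f ord0, [ffun j => f (lift ord0 j)])).
  move=> [x g] _ /=; congr pair; first by rewrite /consf ffunE unlift_none.
  by apply/ffunP=> j; rewrite !ffunE liftK.
move=> f _; apply/ffunP=> i; rewrite /consf ffunE.
by case: unliftP => [j ->|->]; rewrite ?ffunE.
Qed.
Lemma sum_ffun1 (T : finType) (V : nmodType) (F : {ffun 'I_1 -> T} -> V) :
  \sum_f F f = \sum_(x : T) F [ffun _ => x].
Proof.
rewrite (reindex (fun x : T => [ffun _ : 'I_1 => x])) //=.
exists (fun f : {ffun 'I_1 -> T} => f ord0) => [x _|f _]; first by rewrite ffunE.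
by apply/ffunP=> i; rewrite ffunE (ord1 i).
Qed.
Lemma consf0 (T : finType) n (x : T) (g : {ffun 'I_n -> T}) : consf x g ord0 = x.
Proof. by rewrite /consf ffunE unlift_none. Qed.
Lemma consfS (T : finType) n (x : T) (g : {ffun 'I_n.+1 -> T}) (k : nat) :
  (k <= n)%N -> consf x g (inord k.+1) = g (inord k).
Proof.
move=> kn; have -> : (inord k.+1 : 'I_n.+2) = lift ord0 (inord k).
  by apply/val_inj; rewrite /= /bump /= add1n !inordK.
by rewrite /consf ffunE liftK.
Qed.

Lemma path_sum n (H G : 'I_d -> A) :
  \sum_(f : {ffun 'I_n.+1 -> 'I_d})
     (H (f ord0) * (\prod_(k < n) e (f (inord k)) (f (inord k.+1))) * G (f ord_max))
  = \sum_i H i * (M ^+ n *m \col_j G j) i ord0.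
Proof.
elim: n H => [|n IH] H.
  rewrite sum_ffun1; apply: eq_bigr => x _.
  by rewrite big_ord0 mulr1 !ffunE expr0 mul1mx mxE.
rewrite sum_ffunS; apply: eq_bigr => x _.
rewrite exprS -mulmxE -mulmxA mxE.
rewrite (eq_bigr (fun j => e x j * (M ^+ n *m \col_j G j) j ord0)) => [|j _]; last by rewrite mxE.
rewrite -IH mulr_sumr; apply: eq_bigr => g _.
rewrite big_ord_recl consf0.
have -> : (ord_max : 'I_n.+2) = inord n.+1 by apply/val_inj; rewrite /= inordK.
rewrite consfS // (_ : inord 0 = ord0); last by apply/val_inj; rewrite /= inordK.
rewrite consf0 (_ : inord ord0 = ord0); last by apply/val_inj; rewrite /= inordK.
rewrite consfS // (_ : ord_max = inord n); last by apply/val_inj; rewrite /= inordK.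
rewrite !mulrA; congr (_ * _ * _ * _).
apply: eq_bigr => i _; rewrite lift0 !consfS //.
exact: ltnW.
Qed.

Lemma b_el_bv s : b_el e q p s = bv s.
Proof. by rewrite /b_el path_sum. Qed.

Lemma sum_delta (F : 'I_d -> A) i : \sum_x (x == i)%:R * F x = F i.
Proof.
rewrite (bigD1 i) //= eqxx mul1r big1 ?addr0 // => x /negbTE ->.
by rewrite mul0r.
Qed.

Lemma a_el_av m : a_el e m = av m.
Proof.
case: m => [|n]; first by rewrite av0.
rewrite /a_el.
transitivity (\sum_(f : {ffun 'I_n.+1 -> 'I_d}) \sum_i
   ((f ord0 == i)%:R * (\prod_(k < n) e (f (inord k)) (f (inord k.+1))) * e (f ord_max) i)).
  apply: eq_bigr => f _.
  rewrite [RHS](bigD1 (f ord0)) //= eqxx mul1r [X in _ + X]big1 ?addr0; last first.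
    by move=> i ne; rewrite eq_sym (negbTE ne) !mul0r.
  rewrite big_ord_recr /=; congr (_ * e _ (f _)).
    apply: eq_bigr => k _; congr (e (f _) (f _)); apply/val_inj.
      by rewrite /= inordK // ltnS ltnW.
    by rewrite /= inordK ?modn_small // ltnS.
  by apply/val_inj; rewrite /= modnn.
rewrite exchange_big /av; apply: eq_bigr => i _.
rewrite (path_sum n (fun x => (x == i)%:R) (fun c => e c i)) sum_delta XSr mxE.
by apply: eq_bigr => c _; rewrite mxE.
Qed.

Lemma sum_dl (F : 'I_d -> A) i : \sum_x F x *+ (x == i) = F i.
Proof.
rewrite (bigD1 i) //= eqxx mulr1n big1 ?addr0 // => x /negbTE ->.
by rewrite mulr0n.
Qed.
Lemma sum_dr (F : 'I_d -> A) i : \sum_x F x *+ (i == x) = F i.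
Proof. by rewrite -[RHS](sum_dl F i); apply: eq_bigr => x _; rewrite eq_sym. Qed.

Lemma comm_X y n i j : (forall i j, lcomm y (e i j) = 0) -> lcomm y (X n i j) = 0.
Proof.
move=> hy; elim: n i j => [|n IH] i j; first by rewrite X0 lcomm_natr.
rewrite XSr lcomm_sumr big1 // => c _.
by rewrite lcommMr IH hy mul0r mulr0 addr0.
Qed.
Lemma comm_w y n i : (forall i j, lcomm y (e i j) = 0) -> (forall i, lcomm y (q i) = 0) ->
  lcomm y (w n i) = 0.
Proof.
move=> hy hq; elim: n i => [|n IH] i; first by rewrite w0 hq.
rewrite wS lcomm_sumr big1 // => c _.
by rewrite lcommMr IH hy mul0r mulr0 addr0.
Qed.
Lemma comm_av y m : (forall i j, lcomm y (e i j) = 0) -> lcomm y (av m) = 0.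
Proof. by move=> hy; rewrite /av lcomm_sumr big1 // => i _; rewrite comm_X. Qed.

Lemma eX a b n i j : lcomm (e a b) (X n i j) = X n a j *+ (b == i) - X n i b *+ (j == a).
Proof.
elim: n i j => [|n IH] i j.
  by rewrite !X0 lcomm_natr -!mulrnA (eq_sym i b) (eq_sym j a) mulnC subrr.
rewrite !XSr lcomm_sumr.
rewrite (eq_bigr (fun c => (X n a c * e c j) *+ (b == i) - X n i b * e a j *+ (c == a)
    + (X n i b * e a j *+ (b == c) - (X n i c * e c b) *+ (j == a)))); last first.
  move=> c _; rewrite lcommMr IH hee mulrBr mulrBl !mulrnAr !mulrnAl.
  congr (_ - _ + (_ - _)).
    by case: (c =P a) => [->|] //=; rewrite !mulr0n.
  by case: (b =P c) => [->|] //=; rewrite !mulr0n.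
rewrite big_split /= !sumrB sum_dl sum_dr -!sumrMnl.
by rewrite addrA subrK.
Qed.

Lemma e_av a b m : lcomm (e a b) (av m) = 0.
Proof.
rewrite /av lcomm_sumr (eq_bigr (fun i => X m a i *+ (b == i) - X m i b *+ (i == a))).
  by rewrite sumrB sum_dr sum_dl subrr.
by move=> i _; rewrite eX.
Qed.

Lemma av_comm r s : lcomm (av r) (av s) = 0.
Proof.
by rewrite lcommC comm_av ?oppr0 // => i j; rewrite lcommC e_av oppr0.
Qed.

Lemma ew a b n i : lcomm (e a b) (w n i) = w n a *+ (b == i).
Proof.
elim: n i => [|n IH] i; first by rewrite !w0 heq.
rewrite !wS lcomm_sumr -sumrMnl.
rewrite (eq_bigr (fun c => (e a c * w n c) *+ (b == i) - e i b * w n a *+ (c == a)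
    + e i b * w n a *+ (b == c))); last first.
  move=> c _; rewrite lcommMr IH hee mulrBl !mulrnAr !mulrnAl.
  congr (_ - _ + _).
    by case: (c =P a) => [->|] //=; rewrite !mulr0n.
  by case: (b =P c) => [->|] //=; rewrite !mulr0n.
by rewrite big_split /= sumrB sum_dl sum_dr subrK.
Qed.

Lemma pw k n i : lcomm (p k) (w n i) = 0.
Proof.
apply: comm_w => [i' j|i']; first by rewrite lcommC hep oppr0.
by rewrite lcommC hqp oppr0.
Qed.
Lemma pX k n i j : lcomm (p k) (X n i j) = 0.
Proof. by apply: comm_X => i' j'; rewrite lcommC hep oppr0. Qed.
Lemma pav k m : lcomm (p k) (av m) = 0.
Proof. by apply: comm_av => i' j'; rewrite lcommC hep oppr0. Qed.
Lemma pbv k s : lcomm (p k) (bv s) = 0.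
Proof. by rewrite /bv lcomm_sumr big1 // => c _; rewrite lcommMr hpp pw mul0r mulr0 addr0. Qed.

Lemma Xw_comm l n i j k :
  lcomm (X l i j) (w n k) = \sum_(0 <= t < l) w (n + t) i * X (l - t.+1) k j.
Proof.
elim: l i j => [|l IH] i j; first by rewrite X0 lcomm_natl big_geq.
rewrite XSr lcomm_suml.
rewrite (eq_bigr (fun c => (X l i c * w n c) *+ (j == k)
   + \sum_(0 <= t < l) w (n + t) i * (X (l - t.+1) k c * e c j))); last first.
  move=> c _; rewrite lcommMl ew IH mulrnAr mulr_suml; congr (_ + _).
  by apply: eq_bigr => t _; rewrite mulrA.
rewrite big_split /= sumrMnl Xw exchange_big /=.
rewrite big_nat_recr //= subnn X0 addrC; congr (_ + _).
  apply: eq_big_nat => t /andP [_ tl].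
  rewrite -mulr_sumr -XSr subSS subnSK //.
by rewrite addnC eq_sym mulr_natr.
Qed.

Lemma reorder u m k :
  \sum_i w m i * X u k i = w (u + m) k - \sum_(0 <= t < u) w (m + t) k * av (u - t.+1).
Proof.
rewrite (eq_bigr (fun i => X u k i * w m i - lcomm (X u k i) (w m i))); last first.
  by move=> i _; rewrite /lcomm opprB addrC subrK.
rewrite sumrB Xw; congr (_ - _).
rewrite (eq_bigr (fun i => \sum_(0 <= t < u) w (m + t) k * X (u - t.+1) i i)); last first.
  by move=> i _; rewrite Xw_comm.
rewrite exchange_big /=; apply: eq_bigr => t _.
by rewrite /av mulr_sumr.
Qed.

Lemma av_w m n k : lcomm (av m) (w n k) =
  \sum_(0 <= t < m) (w ((m - t.+1) + (n + t)) k
     - \sum_(0 <= t' < m - t.+1) w (n + t + t') k * av (m - t.+1 - t'.+1)).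
Proof.
rewrite /av lcomm_suml.
rewrite (eq_bigr (fun i => \sum_(0 <= t < m) w (n + t) i * X (m - t.+1) k i)); last first.
  by move=> i _; rewrite Xw_comm.
rewrite exchange_big /=; apply: eq_bigr => t _.
by rewrite reorder.
Qed.

Lemma key3 r s k :
  lcomm (av r.+1) (w s k) - lcomm (av r) (w s.+1 k)
  = w (r + s) k - \sum_(0 <= t < r) w (s + t) k * av (r - t.+1).
Proof.
rewrite !av_w !sumrB.
rewrite (eq_big_nat _ _ (F2 := fun _ => w (r + s) k)); last first.
  by move=> t /andP [_ tr]; congr (w _ k); rewrite subSS; lia.
rewrite [X in _ - (X - _)](eq_big_nat _ _ (F2 := fun _ => w (r + s) k)); last first.
  by move=> t /andP [_ tr]; congr (w _ k); lia.
rewrite !sumr_const_nat ?subn0 big_nat_recl //= ?subn0 ?subSS addn0.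
rewrite [X in _ - (_ + X) - _](eq_bigr (fun t => \sum_(0 <= t' < r - t.+1) w (s.+1 + t + t') k * av (r - t.+1 - t'.+1))).
  by rewrite mulrS zid subn0.
by move=> t _; rewrite subSS; apply: eq_bigr => t' _; rewrite addnS addSn.
Qed.

Lemma av_bv m n : lcomm (av m) (bv n) = \sum_k p k * lcomm (av m) (w n k).
Proof.
rewrite /bv lcomm_sumr; apply: eq_bigr => k _.
by rewrite lcommMr lcommC pav oppr0 mul0r add0r.
Qed.

Lemma sum_pwa x (y : A) : \sum_k p k * (w x k * y) = bv x * y.
Proof. by rewrite /bv mulr_suml; apply: eq_bigr => k _; rewrite mulrA. Qed.

Lemma key3b r s :
  lcomm (av r.+1) (bv s) - lcomm (av r) (bv s.+1)
  = bv (r + s) - \sum_(0 <= t < r) bv (s + t) * av (r - t.+1).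
Proof.
rewrite !av_bv -sumrB.
rewrite (eq_bigr (fun k => p k * w (r + s) k
   - \sum_(0 <= t < r) p k * (w (s + t) k * av (r - t.+1)))); last first.
  by move=> k _; rewrite -mulrBr key3 mulrBr mulr_sumr.
rewrite sumrB exchange_big /=; congr (_ - _).
by apply: eq_bigr => t _; rewrite sum_pwa.
Qed.

Lemma claim2b s : lcomm (av 1) (bv s) = bv s.
Proof.
have := key3b 0 s; rewrite big_geq // subr0 av0 lcomm_natl subr0 add0n.
by [].
Qed.

Lemma claim2w s k : lcomm (av 1) (w s k) = w s k.
Proof.
have := key3 0 s k; rewrite big_geq // subr0 av0 lcomm_natl subr0 add0n.
by [].
Qed.

Lemma a2b s : lcomm (av 2) (bv s) = bv s.+1 *+ 2 - bv s * d%:R.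
Proof.
have := key3b 1 s; rewrite big_nat1 claim2b addn0 subn1 av0 add1n.
by move/(canRL (subrK _)) => ->; rewrite mulr2n addrAC.
Qed.

Lemma a2w s k : lcomm (av 2) (w s k) = w s.+1 k *+ 2 - w s k * d%:R.
Proof.
have := key3 1 s k; rewrite big_nat1 claim2w addn0 subn1 av0 add1n.
by move/(canRL (subrK _)) => ->; rewrite mulr2n addrAC.
Qed.

Definition V r s j := lcomm (w r j) (bv s).

Lemma pw' c n j : p c * w n j = w n j * p c.
Proof. by apply/subr0_eq; rewrite -/(lcomm _ _) pw. Qed.

Lemma e_bv j c s : lcomm (e j c) (bv s) = p c * w s j.
Proof.
rewrite /bv lcomm_sumr (eq_bigr (fun k => (p k * w s j) *+ (c == k))).
  by rewrite sum_dr.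
by move=> k _; rewrite lcommMr hep mul0r add0r ew mulrnAr.
Qed.

Lemma VS r s j : V r.+1 s j = \sum_c e j c * V r s c + w s j * bv r.
Proof.
rewrite /V wS lcomm_suml.
rewrite (eq_bigr (fun c => e j c * lcomm (w r c) (bv s) + w s j * (p c * w r c))).
  by rewrite big_split /= -mulr_sumr.
by move=> c _; rewrite lcommMl e_bv pw' mulrA.
Qed.

Lemma bb r s : lcomm (bv r) (bv s) = \sum_j p j * V r s j.
Proof.
rewrite {1}/bv lcomm_suml; apply: eq_bigr => j _.
by rewrite lcommMl pbv mul0r addr0.
Qed.

Lemma wq r j k : lcomm (w r j) (q k) = \sum_(0 <= t < r) w t j * w (r - t.+1) k.
Proof.
elim: r j => [|r IH] j; first by rewrite w0 hqq big_geq.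
rewrite wS lcomm_suml.
rewrite (eq_bigr (fun c => \sum_(0 <= t < r) e j c * w t c * w (r - t.+1) k
   + (q j * w r c) *+ (c == k))); last first.
  move=> c _; rewrite lcommMl IH heq mulrnAl mulr_sumr; congr (_ + _).
  by apply: eq_bigr => t _; rewrite mulrA.
rewrite big_split /= sum_dl exchange_big big_nat_recl //= w0 subn1 /= addrC.
congr (_ + _); apply: eq_bigr => t _; rewrite -mulr_suml wS subSS.
by [].
Qed.

Lemma Vr0 r j : V r 0 j = \sum_(0 <= t < r) w t j * bv (r - t.+1).
Proof.
rewrite /V {1}/bv lcomm_sumr.
rewrite (eq_bigr (fun k => \sum_(0 <= t < r) w t j * (p k * w (r - t.+1) k))); last first.
  move=> k _; rewrite lcommMr (lcommC _ (p k)) pw oppr0 mul0r add0r w0 wq mulr_sumr.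
  by apply: eq_bigr => t _; rewrite [LHS]mulrA (pw' k t j) -mulrA.
by rewrite exchange_big /=; apply: eq_bigr => t _; rewrite -mulr_sumr.
Qed.

Lemma V0r r j : V 0 r j = - \sum_(0 <= t < r) bv t * w (r - t.+1) j.
Proof.
rewrite /V w0 /bv lcomm_sumr.
rewrite (eq_bigr (fun k => - \sum_(0 <= t < r) p k * w t k * w (r - t.+1) j)); last first.
  move=> k _; rewrite lcommMr hqp mul0r add0r lcommC wq mulrN mulr_sumr.
  by congr (- _); apply: eq_bigr => t _; rewrite mulrA.
rewrite sumrN exchange_big /=; congr (- _); apply: eq_bigr => t _.
by rewrite -mulr_suml.
Qed.

Lemma Phi_r0 r j : V r 0 j + V 0 r j = \sum_(0 <= t < r) V (r - t.+1) t j.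
Proof.
rewrite Vr0 V0r big_nat_rev /= -sumrB.
apply: eq_big_nat => t /andP [_ tr].
rewrite add0n (_ : (r - (r - t.+1).+1)%N = t); last by lia.
by [].

Qed.

Lemma Phi_dbl r j :
  (\sum_(0 <= t < r) V (r - t.+1) t j) *+ 2
  = \sum_(0 <= t < r) (V (r - t.+1) t j + V t (r - t.+1) j).
Proof.
rewrite mulr2n [RHS]big_split /=; congr (_ + _).
rewrite big_nat_rev /=; apply: eq_big_nat => t /andP [_ tr].
by rewrite add0n (_ : (r - (r - t.+1).+1)%N = t) //; lia.
Qed.

Lemma Vrec r s j :
  (V r s.+1 j + V r.+1 s j) *+ 2 = (V r s j * d%:R) *+ 2 + lcomm (av 2) (V r s j).
Proof.
have h2 : bv s.+1 *+ 2 = lcomm (av 2) (bv s) + bv s * d%:R by rewrite a2b subrK.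
have h1 : V r s.+1 j *+ 2 = - (V r.+1 s j *+ 2) + V r s j * d%:R
              + lcomm (av 2) (V r s j) + V r s j * d%:R.
  rewrite /V -[LHS]lcommMnr h2 lcommDr lcomm_jacobi (lcommC _ (av 2)) a2w.
  rewrite lcommNl lcommBl lcommMnl lcomm_mulnatl lcomm_mulnatr opprB.
  by congr (_ + _ + _); rewrite addrC.
rewrite mulrnDl h1 addrC !addrA subrr add0r mulr2n addrAC; congr (_ - _).
by rewrite addrAC.
Qed.

Lemma Phi_step r s : (forall j, V r s j + V s r j = 0) ->
  forall j, (V r s.+1 j + V s.+1 r j) + (V r.+1 s j + V s r.+1 j) = 0.
Proof.
move=> h j; apply: half.
rewrite addrACA (addrC (V s.+1 r j)) mulrnDl Vrec Vrec.
rewrite addrACA -mulrnDl -mulrDl h mul0r mul0rn add0r -lcommDr h.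
by rewrite /lcomm mulr0 mul0r subrr.
Qed.

Lemma V00 j : V 0 0 j = 0.
Proof. by rewrite V0r big_geq // oppr0. Qed.

Lemma Phi0 N : forall r s, (r + s)%N = N -> forall j, V r s j + V s r j = 0.
Proof.
elim: N => [|N IHN] r s.
  by case: r => // ; case: s => // _ j; rewrite V00 addr0.
elim: r s => [|r IHr] s Hrs j.
  rewrite add0n in Hrs; rewrite Hrs addrC Phi_r0; apply: half.
  rewrite Phi_dbl big1_seq // => t /andP [_].
  rewrite mem_index_iota => /andP [_ tN]; apply: IHN; lia.
have hl : (r + s = N)%N by lia.
have := Phi_step (IHN r s hl) j.
rewrite (IHr s.+1) ?add0r //; lia.
Qed.

Lemma claim4 r s :
  lcomm (bv r.+1) (bv s) - lcomm (bv r) (bv s.+1) - (bv r * bv s + bv s * bv r) = 0.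
Proof.
have hY : forall r s, lcomm (bv r.+1) (bv s)
     = \sum_j p j * \sum_c e j c * V r s c + bv s * bv r.
  move=> r' s'; rewrite bb.
  rewrite (eq_bigr (fun j => p j * \sum_c e j c * V r' s' c + p j * (w s' j * bv r'))).
    by rewrite big_split /= -sum_pwa.
  by move=> j _; rewrite VS mulrDr.
rewrite (lcommC (bv r)) !hY opprK.
rewrite addrACA -big_split /= big1 ?add0r; last first.
  move=> j _; rewrite -mulrDr -big_split big1 ?mulr0 // => c _.
  change (e j c * V r s c + e j c * V s r c = 0).
  by rewrite -mulrDr (Phi0 (erefl _)) mulr0.
by rewrite [X in X - _]addrC subrr.
Qed.

Lemma claim3 r s :
  lcomm (av r.+1) (bv s) - lcomm (av r) (bv s.+1)
  - (bv (r + s) - \sum_(t < r) bv (r + s - t - 1)%N * av t) = 0.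
Proof.
rewrite key3b; apply/eqP; rewrite subr_eq0; apply/eqP; congr (_ - _).
rewrite -(big_mkord (fun _ => true) (fun t => bv (r + s - t - 1)%N * av t)) big_nat_rev /=.
apply: eq_big_nat => t /andP [_ tr]; congr (bv _ * av _); lia.
Qed.

Lemma all_claims r s :
  [/\ lcomm (av r) (av s) = 0, lcomm (av 1) (bv s) - bv s = 0,
      lcomm (av r.+1) (bv s) - lcomm (av r) (bv s.+1)
      - (bv (r + s) - \sum_(t < r) bv (r + s - t - 1)%N * av t) = 0 &
      lcomm (bv r.+1) (bv s) - lcomm (bv r) (bv s.+1) - (bv r * bv s + bv s * bv r) = 0].
Proof. by split; [exact: av_comm | rewrite claim2b subrr | exact: claim3 | exact: claim4]. Qed.

End Main.

Lemma in_diag0 (d : nat) (A : algType CC) (e e' : 'I_d -> 'I_d -> A) (x : A) :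
  x = 0 -> in_diag_left_ideal e e' x.
Proof.
move=> ->; exists (fun _ _ => 0); symmetry.
by rewrite big1 // => i _; rewrite big1 // => j _; rewrite mul0r.
Qed.

Theorem proposition3p17 (d : nat) (A : algType CC)
    (e e' : 'I_d -> 'I_d -> A) (q p : 'I_d -> A) :
  a_rep e e' q p ->
  let a := a_el e in
  let b := b_el e q p in
  forall r s : nat,
  [/\ in_diag_left_ideal e e' (lcomm (a r) (a s)),
      in_diag_left_ideal e e' (lcomm (a 1%N) (b s) - b s),
      in_diag_left_ideal e e'
        (lcomm (a r.+1) (b s) - lcomm (a r) (b s.+1)
         - (b (r + s)%N - \sum_(t < r) b (r + s - t - 1)%N * a t)) &
      in_diag_left_ideal e e'
        (lcomm (b r.+1) (b s) - lcomm (b r) (b s.+1) - (b r * b s + b s * b r))].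
Proof.
move=> [[hee0 _ heq0 _] _ hep _ [hqq hpp hqp]] a b r s.
have hee1 : forall i j k l, lcomm (e i j) (e k l) = e i l *+ (j == k) - e k j *+ (l == i).
  by move=> i j k l; rewrite hee0 !mulr_natl.
have heq1 : forall i j k, lcomm (e i j) (q k) = q i *+ (j == k).
  by move=> i j k; rewrite heq0 mulr_natl.
have [c1 c2 c3 c4] := all_claims hee1 heq1 hep hqp hpp hqq r s.
have Ea : forall m, a m = av e m by move=> m; rewrite /a a_el_av.
have Eb : forall m, b m = bv e q p m by move=> m; rewrite /b b_el_bv.
split; apply: in_diag0; rewrite ?Ea ?Eb //.
by rewrite (eq_bigr (fun t : 'I_r => bv e q p (r + s - t - 1)%N * av e t)) // => t _; rewrite Ea Eb.
Qed.
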